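(* For every real $p>3$ there exists $n_0=n_0(p)$ such that for all $n\geq n_0$, \[ \phi(2,p,n)>f\bigl(p,T_2(n)\bigr). \]
   Context: For a real number $p>0$ and a finite simple graph $G$, $f(p,G)=\sum_{u\in V(G)} d^p(u)$, where $d(u)$ is the degree of $u$. $\phi(2,p,n)$ is the maximum of $f(p,G)$ over all triangle-free graphs $G$ of order $n$. $T_2(n)$ is the complete bipartite graph on $n$ vertices with parts of sizes $\lceil n/2\rceil$ and $\lfloor n/2\rfloor$. *)

(* Defs.v *)
From HB Require Import structures.
From mathcomp Require Import all_boot all_order all_algebra.
From mathcomp Require Import reals exp.
Set Implicit Arguments. Unset Strict Implicit. Unset Printing Implicit Defensive.
Import Order.TTheory GRing.Theory Num.Theory.
Local Open Scope ring_scope.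

Definition graph (n : nat) := {set 'I_n * 'I_n}.

Definition is_simple (n : nat) (E : graph n) : bool :=
  [forall u : 'I_n, (u, u) \notin E] &&
  [forall u : 'I_n, forall v : 'I_n, ((u, v) \in E) == ((v, u) \in E)].

Definition triangle_free (n : nat) (E : graph n) : bool :=
  [forall u : 'I_n, forall v : 'I_n, forall w : 'I_n,
     ~~ [&& (u, v) \in E, (v, w) \in E & (u, w) \in E]].

Definition deg (n : nat) (E : graph n) (u : 'I_n) : nat :=
  #|[set v : 'I_n | (u, v) \in E]|.

(* f(p,G) = sum_u d(u)^p, real exponent p (powR 0 p = 0 for p > 0). *)
Definition fdeg (R : realType) (p : R) (n : nat) (E : graph n) : R :=
  \sum_(u : 'I_n) powR ((deg E u)%:R) p.

(* phi(2,p,n): max of f(p,G) over triangle-free simple graphs of order n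
   (the empty graph is one such, so the max over a nonempty finite family
   of nonnegative reals is correctly computed with default 0). *)
Definition phi2 (R : realType) (p : R) (n : nat) : R :=
  \big[Num.max/0]_(E : graph n | is_simple E && triangle_free E) fdeg p E.

Definition T2 (n : nat) : graph n :=
  [set uv : 'I_n * 'I_n | (uv.1 < uphalf n)%N != (uv.2 < uphalf n)%N].

(* Main.v *)
Require Import Defs.
From HB Require Import structures.
From mathcomp Require Import all_boot all_order all_algebra.
From mathcomp Require Import reals exp.
From mathcomp Require Import sequences.
From mathcomp Require Import ring lra zify.
Import Order.TTheory GRing.Theory Num.Theory.
Local Open Scope ring_scope.


Definition Kb (n k : nat) : graph n :=
  [set uv : 'I_n * 'I_n | (uv.1 < k)%N != (uv.2 < k)%N].

Lemma Kb_ok n k : is_simple (Kb n k) && triangle_free (Kb n k).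
Proof.
apply/andP; split.
  apply/andP; split.
    by apply/forallP => u; rewrite inE /= eqxx.
  apply/forallP => u; apply/forallP => v; rewrite !inE /=.
  by case: (nat_of_ord u < k)%N; case: (nat_of_ord v < k)%N.
apply/forallP => u; apply/forallP => v; apply/forallP => w; rewrite !inE /=.
by case: (nat_of_ord u < k)%N; case: (nat_of_ord v < k)%N; case: (nat_of_ord w < k)%N.
Qed.

Lemma card_lt n k : (k <= n)%N -> #|[set v : 'I_n | (v < k)%N]| = k.
Proof.
move=> kn.
have -> : [set v : 'I_n | (v < k)%N] = [set widen_ord kn i | i : 'I_k].
  apply/setP => v; rewrite inE; apply/idP/imsetP.
    by move=> vk; exists (Ordinal vk) => //; apply/val_inj.
  by case=> i _ ->; rewrite /= ltn_ord.
rewrite card_imset ?card_ord //.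
by move=> i j /(congr1 val) /= ij; apply/val_inj.
Qed.

Lemma card_ge n k : (k <= n)%N -> #|[set v : 'I_n | ~~ (v < k)%N]| = (n - k)%N.
Proof.
move=> kn.
have -> : [set v : 'I_n | ~~ (v < k)%N] = ~: [set v : 'I_n | (v < k)%N].
  by apply/setP => v; rewrite !inE.
by rewrite cardsCs setCK card_ord (@card_lt n k kn).
Qed.

Lemma deg_Kb n k (u : 'I_n) : (k <= n)%N ->
  deg (Kb n k) u = if (u < k)%N then (n - k)%N else k.
Proof.
move=> kn; rewrite /deg.
case: ifP => uk.
  rewrite -[in RHS](@card_ge n k kn); apply: eq_card => v; rewrite !inE /= uk.
  by case: (nat_of_ord v < k)%N.
rewrite -[in RHS](@card_lt n k kn); apply: eq_card => v; rewrite !inE /= uk.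
by case: (nat_of_ord v < k)%N.
Qed.

Lemma fdeg_Kb (R : realType) (p : R) n k : (k <= n)%N ->
  fdeg p (Kb n k) = k%:R * powR (n - k)%N%:R p + (n - k)%N%:R * powR k%:R p.
Proof.
move=> kn; rewrite /fdeg (bigID (fun u : 'I_n => (u < k)%N)) /=.
rewrite (eq_bigr (fun _ => powR (n - k)%N%:R p)); last first.
  by move=> u uk; rewrite deg_Kb // uk.
rewrite [X in _ + X](eq_bigr (fun _ => powR k%:R p)); last first.
  by move=> u /negbTE uk; rewrite deg_Kb // uk.
rewrite !sumr_const.
have -> : #|[pred u : 'I_n | (u < k)%N]| = k.
  by rewrite -[in RHS](@card_lt n k kn); apply: eq_card => v; rewrite inE.
have -> : #|[pred u : 'I_n | ~~ (u < k)%N]| = (n - k)%N.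
  by rewrite -[in RHS](@card_ge n k kn); apply: eq_card => v; rewrite inE.
by rewrite !mulr_natl.
Qed.

Lemma phi2_ge (R : realType) (p : R) n k : (k <= n)%N ->
  fdeg p (Kb n k) <= phi2 p n.
Proof.
move=> kn; rewrite /phi2.
have := @le_bigmax_cond _ _ _ (0:R) (Kb n k) (fun E : graph n => is_simple E && triangle_free E) (@fdeg R p n) (Kb_ok n k). exact.
Qed.

Lemma T2E n : T2 n = Kb n (uphalf n). Proof. by []. Qed.

Lemma half_bounds n : (2 * uphalf n <= n + 1)%N /\ (2 * (n - uphalf n) <= n + 1)%N /\ (uphalf n <= n)%N.
Proof.
have e1 := uphalf_half n; have e2 := odd_double_half n.
move: e1 e2; case: (odd n) => /= e1 e2; rewrite -muln2 in e2; rewrite e1; lia.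
Qed.


Section A.
Variable R : realType.
Implicit Types x r : R.

Lemma bern x r : 0 < x -> 0 < r < 1 -> x `^ r <= 1 + r * (x - 1).
Proof.
move=> x0 /andP[r0 r1].
have q0 : 0 < 1 - r by rewrite subr_gt0.
have i1 : 0 < r^-1 by rewrite invr_gt0.
have i2 : 0 < (1 - r)^-1 by rewrite invr_gt0.
have := @conjugate_powR R (x `^ r) 1 r^-1 (1 - r)^-1 (powR_ge0 _ _) ler01 i1 i2.
rewrite !invrK addrC subrK => /(_ erefl).
rewrite mulr1 -powRrM mulfV ?gt_eqF // (powRr1 (ltW x0)).
have -> : (1:R) `^ (1-r)^-1 = 1 by rewrite powR1.
move=> h; apply: (le_trans h); lra.
Qed.

Lemma bern_low x r : 0 < x -> 0 < r < 1 -> 1 <= x `^ r * (1 + r * (x^-1 - 1)).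
Proof.
move=> x0 rr.
have xi : 0 < x^-1 by rewrite invr_gt0.
have := @bern (x^-1) r xi rr.
have e : x `^ r * x^-1 `^ r = 1 by rewrite -powRM ?(ltW x0) ?(ltW xi) // mulfV ?gt_eqF // powR1.
have p0 : 0 <= x `^ r by exact: powR_ge0.
move=> h; rewrite -[X in X <= _]e; exact: ler_wpM2l.
Qed.
End A.


Section B.
Variable R : realType.
Implicit Types x r : R.

Lemma low2 x r : 0 < x -> 0 < r < 1 -> x <= x `^ r * (x + r * (1 - x)).
Proof.
move=> x0 rr; have h := @bern_low R x r x0 rr.
have -> : x + r * (1 - x) = x * (1 + r * (x^-1 - 1)).
  by field; rewrite gt_eqF.
rewrite mulrCA; rewrite -{1}[x]mulr1; apply: ler_wpM2l => //; exact: ltW.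
Qed.

Lemma poly_alg r (A W : R) : 0 < r < 1 -> 0 <= A -> 0 <= W ->
  1 + r <= A * (1 + r - r * r) ->
  1 + 2 * r <= W * (1 + 2 * r + r * r * r) ->
  2 * ((1 + r) ^+ 4 * A) < 1 + 2 * r + (1 + 2 * r) ^+ 3 * (A * A * W).
Proof.
move=> /andP[r0 r1] Ag0 Wg0 hA hW.
set a := 1 + r; set b := 1 + 2 * r; set D := b + r * r * r; set E := 1 + r - r * r.
have D0 : 0 < D by rewrite /D /b; nra.
have E0 : 0 < E by rewrite /E; nra.
have b0 : 0 < b by rewrite /b; lra.
have h1 : b ^+ 4 * (A * A) <= b ^+ 3 * (A * A * W) * D.
  have : 0 <= b ^+ 3 * (A * A) by apply: mulr_ge0; [exact: exprn_ge0 (ltW b0)| exact: mulr_ge0].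
  move=> hh; have := ler_wpM2l hh hW.
  have -> : b ^+ 4 * (A * A) = b ^+ 3 * (A * A) * b by rewrite exprS; ring.
  have -> : b ^+ 3 * (A * A * W) * D = b ^+ 3 * (A * A) * (W * D) by ring.
  by [].
suff h2 : 2 * (a ^+ 4 * A) * D < b * D + b ^+ 4 * (A * A).
  have : 2 * (a ^+ 4 * A) * D < (b + b ^+ 3 * (A * A * W)) * D by nra.
  by rewrite ltr_pM2r.
set A0 := a / E.
have hA0 : A0 <= A by rewrite /A0 ler_pdivrMr //; rewrite mulrC.
have A01 : 1 <= A0 by rewrite /A0 ler_pdivlMr // mul1r /a /E; nra.
have I1 : a ^+ 4 * D <= b ^+ 4.
  rewrite /a /D /b; set s := r.
  have e : (1 + 2 * s) ^+ 4 - (1 + s) ^+ 4 * (1 + 2 * s + s * s * s) =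
    2 * s + 10 * s ^+ 2 + 15 * s ^+ 3 + 3 * s ^+ 4 - 8 * s ^+ 5 - 4 * s ^+ 6 - s ^+ 7 by ring.
  have m k : s ^+ k.+1 <= s ^+ k.
    by rewrite exprS ler_piMl ?exprn_ge0 ?ltW.
  have := m 1%N; have := m 2%N; have := m 3%N; have := m 4%N; have := m 5%N; have := m 6%N.
  rewrite expr1 => *.
  have : 0 <= s ^+ 7 by rewrite exprn_ge0 // ltW.
  lra.
have P : 0 < b ^+ 4 * (A0 * A0) - 2 * (a ^+ 4 * A0) * D + b * D.
  have e : (b ^+ 4 * (A0 * A0) - 2 * (a ^+ 4 * A0) * D + b * D) * (E * E) =
    r ^+ 3 * (3 + r * (15 + r * (23 + r * (10 + r * (5 + r * (14 + r * (8 + 2 * r))))))).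
    rewrite /A0 /D /a /b /E; field; exact: (lt0r_neq0 E0).
  have : 0 < r ^+ 3 * (3 + r * (15 + r * (23 + r * (10 + r * (5 + r * (14 + r * (8 + 2 * r))))))).
    apply: mulr_gt0; first exact: exprn_gt0.
    have : 0 <= r * (15 + r * (23 + r * (10 + r * (5 + r * (14 + r * (8 + 2 * r)))))).
      apply: mulr_ge0; first lra.
      repeat (apply: addr_ge0; first lra; apply: mulr_ge0; first lra).
      lra.
    lra.
  rewrite -e => hp.
  by rewrite -(pmulr_lgt0 _ (mulr_gt0 E0 E0)).
have : b ^+ 4 * (A0 * A0) - 2 * (a ^+ 4 * A0) * D <=
       b ^+ 4 * (A * A) - 2 * (a ^+ 4 * A) * D.
  have e : b ^+ 4 * (A * A) - 2 * (a ^+ 4 * A) * D -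
     (b ^+ 4 * (A0 * A0) - 2 * (a ^+ 4 * A0) * D) =
     (A - A0) * (b ^+ 4 * (A + A0) - 2 * (a ^+ 4 * D)) by ring.
  have : 0 <= (A - A0) * (b ^+ 4 * (A + A0) - 2 * (a ^+ 4 * D)).
    apply: mulr_ge0; first lra.
    have b40 : 0 <= b ^+ 4 by exact: exprn_ge0 (ltW b0).
    nra.
  lra.
lra.
Qed.
End B.


Section C.
Variable R : realType.
Implicit Types x r p : R.

Lemma powRn_add x n r : 0 < x -> x `^ (n%:R + r) = x ^+ n * x `^ r.
Proof.
move=> x0; rewrite powRD; last by apply/implyP => _; rewrite gt_eqF.
by rewrite powR_mulrn // ltW.
Qed.

Lemma core_small r : 0 < r < 1 ->
  2 * ((1 + (1 + 2 * r)) / 2) `^ (3 + r + 1) < (1 + 2 * r) + (1 + 2 * r) `^ (3 + r).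
Proof.
move=> rr; have /andP[r0 r1] := rr.
set a := 1 + r; set b := 1 + 2 * r.
have a0 : 0 < a by rewrite /a; lra.
have b0 : 0 < b by rewrite /b; lra.
have an0 : a != 0 := lt0r_neq0 a0.
have aa : 0 <= a * a by rewrite mulr_ge0 // ltW.
have -> : (1 + b) / 2 = a by rewrite /a /b; field.
have -> : 3 + r + 1 = 4%:R + r by lra.
rewrite (powRn_add _ _ _ a0) (powRn_add _ _ _ b0).
set w := b / (a * a).
have w0 : 0 < w by rewrite /w divr_gt0 // mulr_gt0.
have -> : b `^ r = a `^ r * a `^ r * w `^ r.
  rewrite -powRM ?(ltW a0) // -powRM ?(ltW w0) //.
  by congr (_ `^ _); rewrite /w; field.
apply: (@poly_alg R r) => //; try exact: powR_ge0.
  have := @low2 R a r a0 rr.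
  by have -> : a + r * (1 - a) = 1 + r - r * r by rewrite /a; ring.
have := @low2 R w r w0 rr => h.
have e1 : b = (a * a) * w by rewrite /w; field.
have e2 : 1 + 2 * r + r * r * r = (a * a) * (w + r * (1 - w)).
  by rewrite /w /b /a; field; exact: an0.
have h2 := ler_wpM2l aa h.
rewrite -e1 in h2; rewrite e2; apply: (le_trans h2).
by rewrite mulrCA.
Qed.

Lemma core_big p : 4 <= p -> 2 * ((1 + 3) / 2) `^ (p + 1) < 3 + 3 `^ p.
Proof.
move=> p4.
have -> : (1 + 3) / 2 = 2 :> R by field.
rewrite powRD; last by apply/implyP => _; rewrite pnatr_eq0.
rewrite powRr1 //.
have -> : (3 : R) = 2 * (3 / 2) by field.
rewrite powRM //; last by lra.
have h : (3 / 2) `^ 4%:R <= (3 / 2) `^ p :> R by apply: ler_powR => //; lra.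
rewrite powR_mulrn in h; last by lra.
have : 0 < 2 `^ p :> R by apply: powR_gt0.
move=> hp.
have : ((3 / 2) ^+ 4 : R) = 81 / 16 by field.
move=> e; rewrite e in h.
nra.
Qed.

Lemma core p : 3 < p -> exists u0 : R, 0 < u0 /\
  2 * ((1 + u0) / 2) `^ (p + 1) < u0 + u0 `^ p.
Proof.
move=> p3; case: (ltP p 4) => p4.
  exists (1 + 2 * (p - 3)); split; first lra.
  have := @core_small (p - 3); rewrite (_ : 3 + (p - 3) = p); last by ring.
  apply; lra.
by exists 3; split; [lra | exact: core_big].
Qed.
End C.


Section D.
Variable R : realType.
Variable p : R.
Hypothesis p0 : 0 < p.

Definition GG (x y : R) := x * y `^ p + y * x `^ p.

Lemma GG_mono x y x' y' : 0 <= x -> 0 <= y -> x <= x' -> y <= y' ->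
  GG x y <= GG x' y'.
Proof.
move=> x0 y0 xx yy.
have x'0 : 0 <= x' by apply: le_trans xx.
have y'0 : 0 <= y' by apply: le_trans yy.
have hx : x `^ p <= x' `^ p by apply: ge0_ler_powR => //; [exact: ltW | rewrite nnegrE..].
have hy : y `^ p <= y' `^ p by apply: ge0_ler_powR => //; [exact: ltW | rewrite nnegrE..].
rewrite /GG; apply: lerD; apply: ler_pM => //; exact: powR_ge0.
Qed.

Lemma powS l : 0 < l -> l `^ (p + 1) = l * l `^ p.
Proof.
move=> l0; rewrite powRD; last by apply/implyP => _; rewrite gt_eqF.
by rewrite powRr1 ?ltW // mulrC.
Qed.

Lemma GG_hom l x y : 0 < l -> 0 <= x -> 0 <= y ->
  GG (l * x) (l * y) = l `^ (p + 1) * GG x y.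
Proof.
move=> l0 x0 y0; rewrite /GG !powRM ?(ltW l0) // (powS _ l0); ring.
Qed.
End D.


Lemma small_pow (R : realType) (q rho : R) : 0 < q -> 1 < rho ->
  exists2 d : R, 0 < d & (1 + d) `^ q < rho.
Proof.
move=> q0 r1.
have r0 : 0 < rho by lra.
have l0 : 0 < ln rho by apply: ln_gt0.
exists (ln rho / (2 * q)); first by apply: divr_gt0 => //; lra.
set d := ln rho / (2 * q).
have d0 : 0 < d by apply: divr_gt0 => //; lra.
rewrite /powR gt_eqF; last lra.
apply: (@le_lt_trans _ _ (expR (q * d))).
  rewrite ler_expR; apply: ler_wpM2l; first lra.
  apply: le_ln1Dx; lra.
have -> : q * d = ln rho / 2 by rewrite /d; field; rewrite gt_eqF.
rewrite -[X in _ < X](@lnK _ rho) ?posrE // ltr_expR; lra.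
Qed.

Theorem mainTheorem7 (R : realType) (p : R) :
  3 < p ->
  exists n0 : nat, forall n : nat, (n0 <= n)%N -> fdeg p (T2 n) < phi2 p n.
Proof.
move=> p3; have p0 : 0 < p by lra.
have [u0 [u00 hc]] := @core R p p3.
set a := (1 + u0) / 2 in hc.
have a0 : 0 < a by rewrite /a; apply: divr_gt0; lra.
set S := u0 + u0 `^ p in hc.
set T := 2 * a `^ (p + 1) in hc.
have T0 : 0 < T by rewrite /T; apply: mulr_gt0; [lra | exact: powR_gt0].
have q0 : 0 < p + 1 by lra.
have rho1 : 1 < S / T by rewrite ltr_pdivlMr // mul1r.
have [d d0 hd] := @small_pow R (p + 1) (S / T) q0 rho1.
set M := (1 + u0) / u0.
have M0 : 0 < M by rewrite /M; apply: divr_gt0; lra.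
exists (Num.truncn ((1 + M * (1 + d)) / d + M)).+1 => n hn.
set nR := n%:R : R.
have hnR : (1 + M * (1 + d)) / d + M < nR.
  apply: (lt_le_trans (truncnS_gt _)); rewrite /nR ler_nat //.
have x0 : 0 < (1 + M * (1 + d)) / d by apply: divr_gt0 => //; nra.
have nM : 0 < nR - M by lra.
have key : nR + 1 <= (1 + d) * (nR - M).
  have : (1 + M * (1 + d)) / d < nR - M by lra.
  rewrite ltr_pdivrMr // => h; nra.
set al := u0 / (1 + u0).
have al0 : 0 <= al by rewrite /al; apply: divr_ge0; lra.
have al1 : al <= 1 by rewrite /al ler_pdivrMr; lra.
have nR0 : 0 <= nR by rewrite /nR.
set k := Num.truncn (al * nR).
have /andP[hk1 hk2] := truncn_itv (mulr_ge0 al0 nR0).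
rewrite -/k in hk1 hk2.
have kn : (k <= n)%N.
  by rewrite -(ler_nat R) -/nR; apply: (le_trans hk1); nra.
set l := (nR - M) / (1 + u0).
have l0 : 0 < l by rewrite /l; apply: divr_gt0; lra.
have lk : l * u0 <= k%:R.
  have -> : l * u0 = al * nR - 1 by rewrite /l /al /M; field; apply/andP; split; rewrite gt_eqF //; lra.
  move: hk2; rewrite -addn1 natrD; lra.
have lnk : l * 1 <= (n - k)%N%:R.
  rewrite natrB // -/nR.
  have -> : l * 1 = nR - al * nR - 1 / u0 by rewrite /l /al /M; field; apply/andP; split; rewrite gt_eqF //; lra.
  have : 0 < 1 / u0 by apply: divr_gt0.
  lra.
have fE : l `^ (p + 1) * S <= fdeg p (Kb n k).
  rewrite fdeg_Kb //.
  have -> : S = @GG R p u0 1 by rewrite /S /GG powR1 mulr1 mul1r.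
  rewrite -GG_hom //; last exact: ltW.
  apply: GG_mono => //; first by apply: mulr_ge0; exact: ltW.
  by rewrite mulr1; exact: ltW.
set c := uphalf n.
have hc2 := half_bounds n; rewrite -/c in hc2.
case: hc2 => hc2 [hc3 cn].
set mu := (nR + 1) / 2.
have cmu : c%:R <= mu.
  rewrite /mu ler_pdivlMr // mulrC; move: hc2; rewrite -(ler_nat R) natrM natrD -/nR //.
have fmu : (n - c)%N%:R <= mu.
  rewrite /mu ler_pdivlMr // mulrC; move: hc3; rewrite -(ler_nat R) natrM natrD -/nR //.
have fT : fdeg p (T2 n) <= @GG R p mu mu.
  rewrite T2E fdeg_Kb //; apply: GG_mono => //.
set l' := (nR + 1) / (1 + u0).
have l'0 : 0 < l' by rewrite /l'; apply: divr_gt0; lra.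
have emu : mu = l' * a by rewrite /mu /l' /a; field; rewrite gt_eqF //; lra.
have GGa : @GG R p a a = a `^ (p + 1) * 2.
  have -> : a = a * 1 by rewrite mulr1.
  rewrite GG_hom // /GG powR1 mulr1 ?mulr1; congr (_ * _); lra.
set th := (nR + 1) / (nR - M).
have th0 : 0 < th by rewrite /th; apply: divr_gt0; lra.
have eth : l' = l * th by rewrite /l' /l /th; field; apply/andP; split; rewrite gt_eqF //; lra.
have thd : th <= 1 + d by rewrite /th ler_pdivrMr.
have thp : th `^ (p + 1) < S / T.
  apply: (le_lt_trans _ hd); apply: ge0_ler_powR; rewrite ?nnegrE; lra.
have lp0 : 0 < l `^ (p + 1) by apply: powR_gt0.
apply: (le_lt_trans fT).
rewrite emu GG_hom // ?ltW // GGa eth powRM ?ltW //.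
apply: (@lt_le_trans _ _ (l `^ (p + 1) * S)); last first.
  apply: (le_trans fE); exact: phi2_ge.
have : th `^ (p + 1) * T < S by rewrite -ltr_pdivlMr.
rewrite -/T.
have -> : l `^ (p + 1) * th `^ (p + 1) * (a `^ (p + 1) * 2) =
          l `^ (p + 1) * (th `^ (p + 1) * T) by rewrite /T; ring.
move=> h; rewrite ltr_pM2l //.
Qed.
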